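(* Let $a,b\in\mathbb{C}$ with $a\neq0$. Let $U\subseteq\mathbb{C}$ be open and $\lambda:U\to\mathbb{C}$ holomorphic such that, with $y=e^{\lambda}$ and $y^{p}:=e^{p\lambda}$, $y(x)^a=1+axy(x)^b$ for all $x\in U$. (i) If $b\neq1$ and $a-b+1\neq0$, then the function $$F(x)=x\,y(x)-\frac1a\left[\frac{y(x)^{a-b+1}}{a-b+1}-\frac{y(x)^{1-b}}{1-b}\right]$$ satisfies $F'(x)=y(x)$ for all $x\in U$ (wherever $1-bxy^{b-a}\neq0$), i.e. $F$ is an antiderivative of $y$. (ii) If $b=1$, then $F(x)=x\,y(x)-\frac1a\left[\frac{y(x)^{a}}{a}-\lambda(x)\right]$ satisfies $F'(x)=y(x)$ there. (iii) If $b\neq1$, $a-b+1\neq0$, $U$ is a disc centred at $0$ and $\lambda(0)=0$ (so $y(0)=1$), then for all $x\in U$ (along paths in $U$ avoiding points where $1-bty^{b-a}=0$) $$\int_0^x y(t)\,dt=\frac1a\left[\frac{a-b}{a-b+1}\bigl(y(x)^{a-b+1}-1\bigr)+\frac{b}{1-b}\bigl(y(x)^{1-b}-1\bigr)\right].$$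
   Context: This concerns (branches of) solutions of $y^a=1+axy^b$ (the ultra-radical), with complex powers of $y$ computed consistently via the fixed holomorphic logarithm $\lambda=\log y$. In (iii), $y$ is the principal branch, which near $0$ is given by the master series $M(1;a;b;x)=1+x+\sum_{\ell\ge2}\frac{x^\ell}{\ell!}\prod_{\gamma=1}^{\ell-1}(1-a\gamma+b\ell)$. *)

(* Defs.v *)
From Stdlib Require Import Reals.
From Coquelicot Require Import Coquelicot.
Set Implicit Arguments.

Open Scope C_scope.

Definition cexp (z : C) : C :=
  ((exp (Re z) * cos (Im z))%R, (exp (Re z) * sin (Im z))%R).

Definition cpowL (lam : C) (p : C) : C := cexp (p * lam).

Definition Cis_derive (f : C -> C) (z l : C) : Prop :=
  @is_derive C_AbsRing C_NormedModule f z l.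

Definition holomorphic_on (U : C -> Prop) (f : C -> C) : Prop :=
  forall z, U z -> exists l, Cis_derive f z l.

Definition path_derive (g : R -> C) (t : R) (l : C) : Prop :=
  @is_derive R_AbsRing C_R_NormedModule g t l.

Definition C_is_RInt (f : R -> C) (a b : R) (v : C) : Prop :=
  @is_RInt C_R_NormedModule f a b v.

Definition disc0 (r : R) : C -> Prop := fun z => (Cmod z < r)%R.

(* Main.v *)
Require Import Defs.
From Stdlib Require Import Reals Lra Psatz.
From Coquelicot Require Import Coquelicot.
Open Scope C_scope.

Open Scope C_scope.

Lemma cexp_add z w : cexp (z + w) = cexp z * cexp w.
Proof.
  destruct z as [z1 z2], w as [w1 w2]. unfold cexp, Cmult; simpl.
  rewrite exp_plus, cos_plus, sin_plus. f_equal; ring.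
Qed.

Lemma cexp0 : cexp 0 = 1.
Proof. unfold cexp, RtoC; simpl. rewrite exp_0, cos_0, sin_0. f_equal; ring. Qed.

Open Scope R_scope.
Lemma exp_bnd u : Rabs u <= /2 -> Rabs (exp u - 1 - u) <= 2 * u^2.
Proof.
  intros Hu. apply Rabs_le_between in Hu.
  pose proof (exp_ineq1_le u). pose proof (exp_ineq1_le (-u)).
  assert (E: exp u * exp (-u) = 1) by (rewrite <- exp_plus; replace (u + - u) with 0 by ring; apply exp_0).
  pose proof (exp_pos u).
  assert (exp u <= 1 + u + 2*u^2).
  { assert (exp u * (1 - u) <= (1 + u + 2*u^2) * (1-u)) by nra.
    apply Rmult_le_reg_r with (1 - u); lra. }
  apply Rabs_le; split; nra.
Qed.

Lemma cos_bnd v : Rabs v <= /2 -> Rabs (cos v - 1) <= v^2/2.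
Proof.
  intros Hv. apply Rabs_le_between in Hv. pose proof PI2_1.
  destruct (cos_bound v 0) as [H1 _]; try lra.
  replace (cos_approx v (2*0+1)) with (1 - v^2/2) in H1 by (unfold cos_approx, cos_term; simpl; field).
  pose proof (COS_bound v). apply Rabs_le; split; nra.
Qed.

Lemma sin_bnd_pos v : 0 <= v <= /2 -> Rabs (sin v - v) <= v^2.
Proof.
  intros Hv. pose proof PI2_1.
  destruct (sin_bound v 0) as [H1 H2]; try lra.
  replace (sin_approx v (2*0+1)) with (v - v^3/6) in H1 by (unfold sin_approx, sin_term; simpl; field).
  replace (sin_approx v (2*(0+1))) with (v - v^3/6 + v^5/120) in H2 by (unfold sin_approx, sin_term; simpl; field).
  assert (0 <= v^3 <= v^2) by (split; [apply pow_le; lra| nra]).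
  assert (v^5 <= v^3) by (assert (v^5 = v^3 * v^2) by ring; nra).
  apply Rabs_le; split; nra.
Qed.

Lemma sin_bnd v : Rabs v <= /2 -> Rabs (sin v - v) <= v^2.
Proof.
  intros Hv. destruct (Rle_lt_dec 0 v).
  - apply sin_bnd_pos. apply Rabs_le_between in Hv; lra.
  - replace (sin v - v) with (- (sin (-v) - (-v))) by (rewrite sin_neg; ring).
    rewrite Rabs_Ropp. replace (v^2) with ((-v)^2) by ring. apply sin_bnd_pos.
    apply Rabs_le_between in Hv; lra.
Qed.

Open Scope R_scope.

Lemma Cmod_le_sum (x y : R) : Cmod (x, y) <= Rabs x + Rabs y.
Proof.
  unfold Cmod; simpl. rewrite <- (sqrt_Rsqr (Rabs x + Rabs y)) by (pose proof (Rabs_pos x); pose proof (Rabs_pos y); lra).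
  apply sqrt_le_1_alt. unfold Rsqr.
  pose proof (Rabs_pos x); pose proof (Rabs_pos y).
  replace (x*(x*1)) with (Rabs x * Rabs x) by (rewrite <- Rabs_mult; rewrite Rabs_right; [ring| nra]).
  replace (y*(y*1)) with (Rabs y * Rabs y) by (rewrite <- Rabs_mult; rewrite Rabs_right; [ring| nra]).
  nra.
Qed.

Lemma cexp_bnd h : Cmod h <= /2 -> Cmod (cexp h - 1 - h)%C <= 8 * Cmod h ^ 2.
Proof.
  destruct h as [u v]. intros Hr.
  pose proof (Rmax_Cmod (u,v)) as Hm. simpl in Hm.
  set (r := Cmod (u,v)) in *.
  assert (Hu : Rabs u <= r) by (eapply Rle_trans; [apply Rmax_l| exact Hm]).
  assert (Hv : Rabs v <= r) by (eapply Rle_trans; [apply Rmax_r| exact Hm]).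
  assert (Heq : (cexp (u,v) - 1 - (u,v))%C = (exp u * cos v - 1 - u, exp u * sin v - v)).
  { unfold cexp, Cminus, Cplus, Copp, RtoC; simpl. f_equal; ring. }
  rewrite Heq. eapply Rle_trans; [apply Cmod_le_sum|].
  assert (Hu2 : Rabs u <= /2) by lra. assert (Hv2 : Rabs v <= /2) by lra.
  pose proof (exp_bnd u Hu2) as HE. pose proof (cos_bnd v Hv2) as Hc. pose proof (sin_bnd v Hv2) as Hs.
  set (E := exp u - 1 - u) in *. set (c := cos v - 1) in *. set (s := sin v - v) in *.
  assert (u^2 <= r^2) by (rewrite <- (pow2_abs u); pose proof (Rabs_pos u); nra).
  assert (v^2 <= r^2) by (rewrite <- (pow2_abs v); pose proof (Rabs_pos v); nra).
  assert (0 <= r) by (pose proof (Rabs_pos u); lra).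
  assert (HF : Rabs (1 + u + E) <= 2).
  { eapply Rle_trans; [apply Rabs_triang|]. eapply Rle_trans; [apply Rplus_le_compat_r, Rabs_triang|].
    rewrite Rabs_R1. nra. }
  assert (Hx : exp u * cos v - 1 - u = E + c * (1 + u + E)) by (unfold E, c; ring).
  assert (Hy : exp u * sin v - v = u * v + E * v + (1 + u + E) * s) by (unfold E, s; ring).
  rewrite Hx, Hy.
  assert (Rabs (E + c * (1 + u + E)) <= 3 * r^2).
  { eapply Rle_trans; [apply Rabs_triang|]. rewrite Rabs_mult.
    pose proof (Rabs_pos c). pose proof (Rabs_pos (1+u+E)). nra. }
  assert (Rabs (u * v + E * v + (1 + u + E) * s) <= 4 * r^2).
  { eapply Rle_trans; [apply Rabs_triang|]. eapply Rle_trans; [apply Rplus_le_compat_r, Rabs_triang|].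
    rewrite !Rabs_mult.
    pose proof (Rabs_pos u). pose proof (Rabs_pos v). pose proof (Rabs_pos E). pose proof (Rabs_pos s). pose proof (Rabs_pos (1+u+E)).
    assert (Rabs u * Rabs v <= r^2) by nra.
    assert (Rabs E * Rabs v <= 2 * r^2 * r) by nra.
    assert (Rabs (1 + u + E) * Rabs s <= 2 * r^2) by nra.
    nra. }
  nra.
Qed.

Open Scope C_scope.

Lemma cexp_derive z : Cis_derive cexp z (cexp z).
Proof.
  unfold Cis_derive, is_derive, filterdiff. split; [apply is_linear_scal_l|].
  intros x Hx. assert (Hx2 := @is_filter_lim_locally_unique C_AbsRing (AbsRing_NormedModule C_AbsRing) z x Hx). subst x.
  intros eps.
  set (K := Cmod (cexp z)).
  assert (HK : (0 < 8 * (K + 1))%R) by (pose proof (Cmod_ge_0 (cexp z)); unfold K; lra).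
  assert (Hd : (0 < Rmin (/2) (eps / (8 * (K+1))))%R).
  { apply Rmin_pos; [lra| apply Rdiv_lt_0_compat; [apply cond_pos| exact HK]]. }
  exists (mkposreal _ Hd). intros y Hy. unfold ball in Hy; simpl in Hy. unfold AbsRing_ball in Hy; simpl in Hy.
  change (Cmod (y - z) < Rmin (/ 2) (eps / (8 * (K + 1))))%R in Hy.
  change (Cmod (cexp y - cexp z - (y - z) * cexp z) <= eps * Cmod (y - z))%R.
  change C in y.
  assert (Ey : cexp y = cexp z * cexp (y - z)) by (rewrite <- cexp_add; f_equal; ring).
  rewrite Ey. set (h := (y - z)%C) in *.
  replace (cexp z * cexp h - cexp z - h * cexp z) with (cexp z * (cexp h - 1 - h)) by ring.
  rewrite Cmod_mult. fold K.
  assert (H1 : (Cmod h <= /2)%R) by (pose proof (Rmin_l (/2) (eps / (8 * (K+1)))); lra).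
  assert (H2 : (Cmod h <= eps / (8 * (K+1)))%R) by (pose proof (Rmin_r (/2) (eps / (8 * (K+1)))); lra).
  pose proof (cexp_bnd h H1).
  assert (HK0 : (0 <= K)%R) by apply Cmod_ge_0.
  pose proof (Cmod_ge_0 h).
  assert (H3 : (8 * (K+1) * Cmod h <= eps)%R).
  { apply (Rmult_le_compat_l (8 * (K+1))) in H2; [|lra]. field_simplify in H2; lra. }
  apply Rle_trans with (K * (8 * Cmod h ^ 2))%R.
  { apply Rmult_le_compat_l; auto. }
  nra.
Qed.

Open Scope C_scope.

Lemma nCR (x : C_R_NormedModule) : norm x = Cmod x.
Proof. change (sqrt (Rabs (fst x) ^ 2 + Rabs (snd x) ^ 2) = Cmod x)%R. rewrite !pow2_abs. reflexivity. Qed.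

Lemma CR_filterdiff F z l : Cis_derive F z l ->
  @filterdiff R_AbsRing C_R_NormedModule C_R_NormedModule F (locally z) (fun h => h * l).
Proof.
  intros [_ Hd].
  specialize (Hd z (fun P H => H)).
  split.
  - constructor.
    + intros x y. change (@eq Complex.C ((x + y) * l) (x * l + y * l)). ring.
    + intros k x. change (@eq Complex.C (scal k x * l) (scal k (x * l))). rewrite !scal_R_Cmult. ring.
    + exists (Cmod l + 1)%R. split; [pose proof (Cmod_ge_0 l); lra|].
      intros x. rewrite !nCR, Cmod_mult. pose proof (Cmod_ge_0 x). pose proof (Cmod_ge_0 l). nra.
  - intros x Hx.
    assert (Hx2 := @is_filter_lim_locally_unique R_AbsRing C_R_NormedModule z x Hx). subst x.
    intros eps. destruct (Hd eps) as [d Hdd].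
    assert (Hd2 : (0 < d / 2)%R) by (pose proof (cond_pos d); lra).
    exists (mkposreal _ Hd2). intros y [H1 H2].
    change (Rabs (fst y - fst z) < d / 2)%R in H1.
    change (Rabs (snd y - snd z) < d / 2)%R in H2.
    assert (Hy : (Cmod (y - z) < d)%R).
    { destruct y as [y1 y2], z as [z1 z2]. simpl in *.
      eapply Rle_lt_trans; [apply Cmod_le_sum|]. simpl. unfold Rminus in *. lra. }
    specialize (Hdd y Hy).
    change (Cmod (F y - F z - (y - z) * l) <= eps * Cmod (y - z))%R in Hdd.
    rewrite !nCR. exact Hdd.
Qed.

Lemma chain_RC F g t l d : Cis_derive F (g t) l -> path_derive g t d ->
  path_derive (fun s => F (g s)) t (d * l).
Proof.
  intros HF Hg. unfold path_derive, is_derive in *.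
  eapply filterdiff_ext_lin.
  - apply (filterdiff_comp' g F t _ _ Hg (CR_filterdiff F (g t) l HF)).
  - intros s. simpl. rewrite !scal_R_Cmult. ring.
Qed.

Open Scope C_scope.

Lemma conv f x l : @is_derive C_AbsRing (AbsRing_NormedModule C_AbsRing) f x l -> Cis_derive f x l.
Proof. intros [[Hp Hs [M [HM Hn]]] Hd]. split. constructor.
 - exact Hp.
 - exact Hs.
 - exists M. split. exact HM. intros y. specialize (Hn y). exact Hn.
 - intros y Hy eps. specialize (Hd y Hy eps). exact Hd.
Qed.

Lemma conv2 f x l : Cis_derive f x l -> @is_derive C_AbsRing (AbsRing_NormedModule C_AbsRing) f x l.
Proof. intros [[Hp Hs [M [HM Hn]]] Hd]. split. constructor.
 - exact Hp.
 - exact Hs.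
 - exists M. split. exact HM. intros y. specialize (Hn y). exact Hn.
 - intros y Hy eps. specialize (Hd y Hy eps). exact Hd.
Qed.

Lemma Cd_ext f x l l' : Cis_derive f x l -> l = l' -> Cis_derive f x l'.
Proof. intros H ->; exact H. Qed.

Lemma Cd_id x : Cis_derive (fun z => z) x 1.
Proof. apply conv. apply (@is_derive_id C_AbsRing). Qed.

Lemma Cd_const c x : Cis_derive (fun _ => c) x 0.
Proof. apply (@is_derive_const C_AbsRing C_NormedModule). Qed.

Lemma Cd_plus f g x df dg : Cis_derive f x df -> Cis_derive g x dg ->
  Cis_derive (fun z => f z + g z) x (df + dg).
Proof. intros; apply (@is_derive_plus C_AbsRing C_NormedModule); auto. Qed.

Lemma Cd_minus f g x df dg : Cis_derive f x df -> Cis_derive g x dg ->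
  Cis_derive (fun z => f z - g z) x (df - dg).
Proof. intros; apply (@is_derive_minus C_AbsRing C_NormedModule); auto. Qed.

Lemma Cd_mult f g x df dg : Cis_derive f x df -> Cis_derive g x dg ->
  Cis_derive (fun z => f z * g z) x (df * g x + f x * dg).
Proof. intros; apply conv; apply (@is_derive_mult C_AbsRing); try apply conv2; auto. apply Cmult_comm. Qed.

Lemma Cd_cmul c f x df : Cis_derive f x df -> Cis_derive (fun z => c * f z) x (c * df).
Proof.
  intros H. eapply Cd_ext. apply (Cd_mult (fun _ => c) f); [apply Cd_const| exact H]. ring.
Qed.

Lemma Cd_mulc c f x df : Cis_derive f x df -> Cis_derive (fun z => f z * c) x (df * c).
Proof.
  intros H. eapply Cd_ext. apply (Cd_mult f (fun _ => c)); [exact H| apply Cd_const]. ring.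
Qed.

Lemma Cd_comp f g x df dg : Cis_derive f (g x) df -> Cis_derive g x dg ->
  Cis_derive (fun z => f (g z)) x (dg * df).
Proof. intros; apply (@is_derive_comp C_AbsRing C_NormedModule); auto. apply conv2; auto. Qed.

Lemma Cd_cexp lam x L : Cis_derive lam x L -> Cis_derive (fun z => cexp (lam z)) x (L * cexp (lam x)).
Proof. intros H. apply (Cd_comp cexp lam); auto. apply cexp_derive. Qed.

Lemma Cd_cpow lam x L p : Cis_derive lam x L ->
  Cis_derive (fun z => cpowL (lam z) p) x (p * L * cpowL (lam x) p).
Proof.
  intros H. unfold cpowL. apply (Cd_cexp (fun z => p * lam z)). apply Cd_cmul; auto.
Qed.

Open Scope C_scope.

Lemma loc1 (z : Complex.C) (P : Complex.C -> Prop) :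
  @locally (AbsRing_UniformSpace C_AbsRing) z P -> @locally C_R_NormedModule z P.
Proof.
  intros [d Hd]. assert (Hd2 : (0 < d / 2)%R) by (pose proof (cond_pos d); lra).
  exists (mkposreal _ Hd2). intros y [H1 H2]. apply Hd.
  change (Rabs (fst y - fst z) < d / 2)%R in H1.
  change (Rabs (snd y - snd z) < d / 2)%R in H2.
  change (Cmod (y - z) < d)%R.
  destruct y as [y1 y2], z as [z1 z2]. simpl in *.
  eapply Rle_lt_trans; [apply Cmod_le_sum|]. simpl. unfold Rminus in *. lra.
Qed.

Lemma loc2 (z : Complex.C) (P : Complex.C -> Prop) :
  @locally C_R_NormedModule z P -> @locally (AbsRing_UniformSpace C_AbsRing) z P.
Proof.
  intros [d Hd]. exists d. intros y Hy. apply Hd.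
  change (Cmod (y - z) < d)%R in Hy.
  pose proof (Rmax_Cmod (y - z)) as Hm.
  split.
  - change (Rabs (fst y - fst z) < d)%R.
    eapply Rle_lt_trans; [|exact Hy]. eapply Rle_trans; [|exact Hm].
    destruct y, z; simpl. unfold Rminus. apply Rmax_l.
  - change (Rabs (snd y - snd z) < d)%R.
    eapply Rle_lt_trans; [|exact Hy]. eapply Rle_trans; [|exact Hm].
    destruct y, z; simpl. unfold Rminus. apply Rmax_r.
Qed.

Lemma cont_mult (h k : R -> Complex.C) t :
  @continuous R_UniformSpace C_R_NormedModule h t ->
  @continuous R_UniformSpace C_R_NormedModule k t ->
  @continuous R_UniformSpace C_R_NormedModule (fun s => h s * k s) t.
Proof.
  intros Hh Hk P HP. apply loc2 in HP.
  assert (Hh' : filterlim h (locally t) (@locally (AbsRing_UniformSpace C_AbsRing) (h t))).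
  { intros Q HQ. apply Hh. apply loc1. exact HQ. }
  assert (Hk' : filterlim k (locally t) (@locally (AbsRing_UniformSpace C_AbsRing) (k t))).
  { intros Q HQ. apply Hk. apply loc1. exact HQ. }
  assert (HH : filterlim (fun s => @mult C_AbsRing (h s) (k s)) (locally t)
     (@locally (AbsRing_UniformSpace C_AbsRing) (@mult C_AbsRing (h t) (k t)))).
  { eapply filterlim_comp_2; [exact Hh'|exact Hk'|apply filterlim_mult]. }
  apply HH. exact HP.
Qed.

Open Scope C_scope.

Theorem mainTheorem10 (a b : C) (U : C -> Prop) (lam : C -> C) :
  a <> 0 ->
  open U ->
  holomorphic_on U lam ->
  (forall x, U x -> cpowL (lam x) a = 1 + a * x * cpowL (lam x) b) ->
  (* (i) *)
  (b <> 1 -> a - b + 1 <> 0 ->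
   forall x, U x -> 1 - b * x * cpowL (lam x) (b - a) <> 0 ->
   Cis_derive
     (fun z => z * cexp (lam z)
        - / a * (cpowL (lam z) (a - b + 1) / (a - b + 1)
                 - cpowL (lam z) (1 - b) / (1 - b)))
     x (cexp (lam x))) /\
  (* (ii) *)
  (b = 1 ->
   forall x, U x -> 1 - b * x * cpowL (lam x) (b - a) <> 0 ->
   Cis_derive
     (fun z => z * cexp (lam z) - / a * (cpowL (lam z) a / a - lam z))
     x (cexp (lam x))) /\
  (* (iii) *)
  (b <> 1 -> a - b + 1 <> 0 ->
   (exists r : R, (0 < r)%R /\ forall z, U z <-> disc0 r z) ->
   lam 0 = 0 ->
   forall (x : C) (g dg : R -> C),
     g 0%R = 0 -> g 1%R = x ->
     (forall t : R, (0 <= t <= 1)%R ->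
        U (g t) /\ 1 - b * g t * cpowL (lam (g t)) (b - a) <> 0 /\
        path_derive g t (dg t) /\ continuous dg t) ->
     C_is_RInt (fun t => cexp (lam (g t)) * dg t) 0 1
       (/ a * ((a - b) / (a - b + 1) * (cpowL (lam x) (a - b + 1) - 1)
               + b / (1 - b) * (cpowL (lam x) (1 - b) - 1)))).
Proof.
  intros Ha _ Hhol Hid.
  assert (HB : forall b : C, b <> 1 -> 1 - b <> 0).
  { intros c Hc E. apply Hc. replace c with (1 - (1 - c)) by ring. rewrite E. ring. }
  assert (Pi : b <> 1 -> a - b + 1 <> 0 -> forall x, U x ->
   Cis_derive
     (fun z => z * cexp (lam z)
        - / a * (cpowL (lam z) (a - b + 1) / (a - b + 1)
                 - cpowL (lam z) (1 - b) / (1 - b)))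
     x (cexp (lam x))).
  { intros Hb1 HA x Ux. destruct (Hhol x Ux) as [L HL].
    pose proof (HB b Hb1) as HB1.
    eapply Cd_ext.
    { apply Cd_minus.
      - apply Cd_mult; [apply Cd_id| apply Cd_cexp; exact HL].
      - apply Cd_cmul. unfold Cdiv. apply Cd_minus; apply Cd_mulc; apply Cd_cpow; exact HL. }
    pose proof (Hid x Ux) as Hx. unfold cpowL in *.
    set (l := lam x) in *.
    assert (e1 : cexp ((a - b + 1) * l) = cexp (a * l) * cexp ((1 - b) * l))
      by (rewrite <- cexp_add; f_equal; ring).
    assert (e2 : cexp l = cexp (b * l) * cexp ((1 - b) * l))
      by (rewrite <- cexp_add; f_equal; ring).
    rewrite e1, e2, Hx. field. auto. }
  split; [|split].
  - intros Hb1 HA x Ux _. apply Pi; auto.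
  - intros Hb x Ux _. subst b. destruct (Hhol x Ux) as [L HL].
    eapply Cd_ext.
    { apply Cd_minus.
      - apply Cd_mult; [apply Cd_id| apply Cd_cexp; exact HL].
      - apply Cd_cmul. unfold Cdiv. apply Cd_minus; [apply Cd_mulc; apply Cd_cpow; exact HL| exact HL]. }
    pose proof (Hid x Ux) as Hx. unfold cpowL in *.
    rewrite Cmult_1_l in Hx.
    rewrite Hx. field. auto.
  - intros Hb1 HA _ Hl0 x g dg Hg0 Hg1 Hpath.
    set (F := (fun z => z * cexp (lam z)
        - / a * (cpowL (lam z) (a - b + 1) / (a - b + 1)
                 - cpowL (lam z) (1 - b) / (1 - b)))).
    assert (Hder : forall t, (0 <= t <= 1)%R -> path_derive (fun s => F (g s)) t (cexp (lam (g t)) * dg t)).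
    { intros t Ht. destruct (Hpath t Ht) as [Ut [_ [Hg _]]].
      replace (cexp (lam (g t)) * dg t) with (dg t * cexp (lam (g t))) by apply Cmult_comm.
      apply (chain_RC F g t _ _ (Pi Hb1 HA (g t) Ut) Hg). }
    assert (Hcont : forall t, (0 <= t <= 1)%R -> continuous (fun s => cexp (lam (g s)) * dg s) t).
    { intros t Ht. destruct (Hpath t Ht) as [Ut [_ [Hg Hc]]]. destruct (Hhol (g t) Ut) as [L HL].
      apply cont_mult; [| exact Hc].
      apply (@ex_derive_continuous R_AbsRing C_R_NormedModule). eexists.
      apply (chain_RC (fun z => cexp (lam z)) g t _ _ (Cd_cexp lam (g t) L HL) Hg). }
    pose proof (@is_RInt_derive C_R_CompleteNormedModule (fun s => F (g s)) (fun t => cexp (lam (g t)) * dg t) 0 1) as HI.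
    rewrite Rmin_left, Rmax_right in HI by lra.
    specialize (HI Hder Hcont).
    unfold C_is_RInt.
    destruct (Hpath 1%R ltac:(lra)) as [U1 _]. rewrite Hg1 in U1.
    pose proof (Hid x U1) as Hx.
    replace (/ a * ((a - b) / (a - b + 1) * (cpowL (lam x) (a - b + 1) - 1)
               + b / (1 - b) * (cpowL (lam x) (1 - b) - 1))) with (minus (F (g 1%R)) (F (g 0%R))).
    { exact HI. }
    change (minus (F (g 1%R)) (F (g 0%R))) with (F (g 1%R) - F (g 0%R)).
    rewrite Hg0, Hg1. unfold F. unfold cpowL in *. rewrite Hl0. rewrite !Cmult_0_r, cexp0.
    pose proof (HB b Hb1) as HB1.
    set (l := lam x) in *.
    assert (e1 : cexp ((a - b + 1) * l) = cexp (a * l) * cexp ((1 - b) * l))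
      by (rewrite <- cexp_add; f_equal; ring).
    assert (e2 : cexp l = cexp (b * l) * cexp ((1 - b) * l))
      by (rewrite <- cexp_add; f_equal; ring).
    rewrite e1, e2, Hx. match goal with |- ?u = ?v => change (@eq Complex.C u v) end. field. auto.
Qed.
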